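(* For every simple game $v$ on $n\ge 2$ players and every player $i$ that is not a dictator in $v$, we have $\mathrm{SSI}_i(v)\le \frac{n-1}{n}$.
   Context: A simple game on $N=\{1,\dots,n\}$ is a surjective, monotone map $v\colon 2^N\to\{0,1\}$ (monotone: $v(S)\le v(T)$ whenever $S\subseteq T\subseteq N$). Player $j$ is a null player if $v(S)=v(S\cup\{j\})$ for all $S\subseteq N\setminus\{j\}$; player $i$ is a dictator if $v(\{i\})=1$ and all other players are null players. The Shapley–Shubik index is $\mathrm{SSI}_i(v)=\sum_{S\subseteq N\setminus\{i\}}\frac{|S|!\,(n-|S|-1)!}{n!}\,\big(v(S\cup\{i\})-v(S)\big)$. *)

(* Defs.v *)
(* Players N = {1..n} are modelled as 'I_n (0-based). *)
From HB Require Import structures.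
From mathcomp Require Import all_boot all_order all_algebra.
Set Implicit Arguments. Unset Strict Implicit. Unset Printing Implicit Defensive.
Import Order.TTheory GRing.Theory Num.Theory.

Definition monotone_game (n : nat) (v : {set 'I_n} -> bool) : Prop :=
  forall S T : {set 'I_n}, S \subset T -> v S <= v T.

Definition surjective_game (n : nat) (v : {set 'I_n} -> bool) : Prop :=
  (exists S, v S = false) /\ (exists S, v S = true).

Definition simple_game (n : nat) (v : {set 'I_n} -> bool) : Prop :=
  surjective_game v /\ monotone_game v.

Definition null_player (n : nat) (v : {set 'I_n} -> bool) (j : 'I_n) : Prop :=
  forall S : {set 'I_n}, j \notin S -> v S = v (j |: S).

Definition dictator (n : nat) (v : {set 'I_n} -> bool) (i : 'I_n) : Prop :=
  v [set i] = true /\ forall j : 'I_n, j != i -> null_player v j.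

Local Open Scope ring_scope.

Definition SSI (n : nat) (v : {set 'I_n} -> bool) (i : 'I_n) : rat :=
  \sum_(S : {set 'I_n} | i \notin S)
     ((#|S|`! * (n - #|S| - 1)`!)%:R / (n`!)%:R) *
     ((v (i |: S) : nat)%:R - (v S : nat)%:R).

(* Main.v *)
Require Import Defs.
From mathcomp Require Import all_boot all_order all_algebra.
From mathcomp Require Import zify.
Import Order.TTheory GRing.Theory Num.Theory.

Lemma wsum_nat (n : nat) (i : 'I_n) :
  (\sum_(S : {set 'I_n} | i \notin S) (#|S|`! * (n - #|S| - 1)`!))%N = n`!.
Proof.
have cardS : forall S : {set 'I_n}, i \notin S -> (#|S| < n)%N.
  move=> S hS; have : S \subset [set~ i].
    by apply/subsetP=> x xS; rewrite !inE; apply: contraNneq hS => <-.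
  move/subset_leq_card; rewrite cardsC1 card_ord.
  by case: n i S hS => [[]//|m] i S hS; rewrite /= ltnS.
transitivity (\sum_(S : {set 'I_n} | i \notin S) \sum_(k < n) ((#|S| == k) * (k`! * (n - k - 1)`!)))%N.
  apply: eq_bigr => S hS; rewrite (bigD1 (Ordinal (cardS S hS))) //= eqxx mul1n.
  rewrite big1 ?addn0 // => k hk.
  case: eqP => // h; case/eqP: hk; apply/val_inj; by rewrite /= h.
rewrite exchange_big /=.
rewrite (eq_bigr (fun k : 'I_n => (n.-1)`!)); last first.
  move=> k _; rewrite -big_distrl /=.
  have -> : (\sum_(S : {set 'I_n} | i \notin S) (#|S| == k))%N
            = #|[set A : {set 'I_n} | A \subset [set~ i] & #|A| == k]|.
    rewrite -sum1_card big_mkcond [RHS]big_mkcond /=; apply: eq_bigr => S _.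
    rewrite !inE; have -> : (S \subset [set~ i]) = (i \notin S).
      apply/subsetP/idP => [h|h x xS]; first by apply/negP=> /h; rewrite !inE eqxx.
      by rewrite !inE; apply: contraNneq h => <-.
    by case: (i \notin S); case: (#|S| == k).
  rewrite cards_draws cardsC1 card_ord.
  have hk := ltn_ord k.
  have -> : (n - k - 1 = n.-1 - k)%N by lia.
  apply: bin_fact; lia.
rewrite sum_nat_const card_ord.
case: n i {cardS} => [[]//|m] _ /=.
by rewrite factS.
Qed.

Local Open Scope ring_scope.

Lemma wsum (n : nat) (i : 'I_n) :
  \sum_(S : {set 'I_n} | i \notin S)
     ((#|S|`! * (n - #|S| - 1)`!)%:R / (n`!)%:R) = 1 :> rat.
Proof.
rewrite -mulr_suml -natr_sum wsum_nat divff //.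
by rewrite pnatr_eq0 -lt0n fact_gt0.
Qed.

Theorem theorem1 (n : nat) (hn : (2 <= n)%N) (v : {set 'I_n} -> bool)
  (hv : simple_game v) (i : 'I_n) (hi : ~ dictator v i) :
  (SSI v i <= (n - 1)%:R / n%:R :> rat)%R.
Proof.
case: hv => _ mono.
set w := fun S : {set 'I_n} => ((#|S|`! * (n - #|S| - 1)`!)%:R / (n`!)%:R : rat).
set c := fun S : {set 'I_n} => ((v (i |: S) : nat)%:R - (v S : nat)%:R : rat).
have w0 : forall S, 0 <= w S by move=> S; rewrite /w divr_ge0 ?ler0n.
have c01 : forall S, 0 <= c S <= 1.
  move=> S; have := mono _ _ (subsetUr [set i] S); rewrite /c.
  by case: (v S); case: (v (i |: S)).
have nP : (0 < n)%N by lia.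
have wn : forall S : {set 'I_n}, (#|S| = 0 \/ #|S| = n.-1)%N -> w S = n%:R^-1.
  move=> S hS; rewrite /w.
  have -> : (#|S|`! * (n - #|S| - 1)`! = (n.-1)`!)%N.
    case: hS => ->; first by rewrite fact0 mul1n subn0 subn1.
    have -> : (n - n.-1 - 1 = 0)%N by lia.
    by rewrite fact0 muln1.
  have -> : n`! = (n * (n.-1)`!)%N by move: nP; case: (n) => [|m] //= _; rewrite factS.
  rewrite natrM invfM mulrA mulrC mulrA mulVf ?mul1r //.
  by rewrite pnatr_eq0 -lt0n fact_gt0.
have [S0 [hS0 cS0 wS0]] : exists S0 : {set 'I_n}, [/\ i \notin S0, c S0 = 0 & w S0 = n%:R^-1].
  case hvi: (v [set i]).
  - case hvc: (v [set~ i]).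
    + exists [set~ i]; split; first by rewrite !inE eqxx.
      * rewrite /c; have -> : i |: [set~ i] = setT by rewrite setUCr.
        rewrite hvc; have := mono _ _ (subsetT [set~ i]); rewrite hvc.
        by case: (v setT).
      * by apply: wn; right; rewrite cardsC1 card_ord.
    + exfalso; apply: hi; split=> // j ji S jS.
      case iS: (i \in S).
      * have := mono [set i] S; rewrite sub1set iS hvi => /(_ isT).
        have := mono [set i] (j |: S); rewrite sub1set !inE iS orbT hvi => /(_ isT).
        by case: (v S); case: (v (j |: S)).
      * have sS : S \subset [set~ i].
          by apply/subsetP=> x xS; rewrite !inE; apply: contraFneq iS => <-.
        have sjS : j |: S \subset [set~ i].
          apply/subsetP=> x; rewrite !inE => /orP [/eqP ->|xS]; first by [].
          by apply: contraFneq iS => <-.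
        have := mono _ _ sS; have := mono _ _ sjS; rewrite hvc.
        by case: (v S); case: (v (j |: S)).
  - exists set0; split; first by rewrite inE.
    + rewrite /c setU0 hvi; have := mono _ _ (sub0set [set i]); rewrite hvi.
      by case: (v set0).
    + by apply: wn; left; rewrite cards0.
rewrite /SSI -/w -/c.
rewrite (eq_bigr (fun S => w S * c S)) //.
rewrite (bigD1 S0) //= cS0 mulr0 add0r.
have H1 : \sum_(S : {set 'I_n} | (i \notin S) && (S != S0)) w S * c S <= \sum_(S : {set 'I_n} | (i \notin S) && (S != S0)) w S.
  apply: ler_sum => S _; have /andP [_ h] := c01 S.
  by rewrite -[leRHS]mulr1 ler_wpM2l.
apply: (le_trans H1).
have E : w S0 + \sum_(S : {set 'I_n} | (i \notin S) && (S != S0)) w S = 1.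
  by rewrite -(bigD1 S0) //=; exact: wsum i.
move: E; rewrite wS0 addrC => E.
have -> : (n - 1)%:R / n%:R = 1 - n%:R^-1 :> rat.
  rewrite natrB; last by lia.
  by rewrite mulrBl divff // ?mul1r // pnatr_eq0; lia.
have E2 : 1 - n%:R^-1 == \sum_(S : {set 'I_n} | (i \notin S) && (S != S0)) w S.
  by rewrite subr_eq E.
by rewrite (eqP E2).
Qed.
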